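(* Let $p$ be a prime and $r$ a positive integer. Then $p\in F_r$ if and only if $r<p<(p_{b(r)+1}-r)(p_{b(r)+2}-r)+r$.
   Context: $p_i$ denotes the $i$-th prime. For a positive integer $r$, $S_r$ is the multiplicative arithmetic function with $S_r(q^{\alpha})=0$ if $q\leq r$ and $S_r(q^{\alpha})=q^{\alpha-1}(q-r)$ if $q>r$, for all primes $q$ and positive integers $\alpha$. $B_r=\{n\in\mathbb{N}: S_r(n)>0\}$ (positive integers whose smallest prime factor exceeds $r$, together with $1$). $F_r$ is the set of $n\in B_r$ such that $S_r(n)<S_r(m)$ for all $m\in B_r$ with $m>n$. $b(1)=0$, and for $r\geq 2$, $b(r)$ is the largest integer with $p_{b(r)}\leq r$. *)

(* Defs.v *)
From mathcomp Require Import all_boot.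
Set Implicit Arguments. Unset Strict Implicit. Unset Printing Implicit Defensive.

(* S_r(n) = prod over prime powers q^a || n of q^(a-1) (q - r); with truncated
   nat subtraction, q - r = 0 exactly when q <= r, matching S_r(q^a) = 0 there. *)
Definition Sr (r n : nat) : nat :=
  \prod_(q <- primes n) (q ^ (logn q n).-1 * (q - r)).

Definition inB (r n : nat) : Prop := 0 < n /\ 0 < Sr r n.

Definition inF (r n : nat) : Prop :=
  inB r n /\ forall m, inB r m -> n < m -> Sr r n < Sr r m.

Lemma next_prime_ex n : exists p, (n < p) && prime p.
Proof. case: (prime_above n) => p h1 h2; exists p; by rewrite h1 h2. Qed.

Definition next_prime (n : nat) : nat := ex_minn (next_prime_ex n).

(* p_i, the i-th prime (1-indexed: pr 1 = 2, pr 2 = 3, ...); pr 0 = 1 is a dummy *)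
Definition pr (i : nat) : nat := iter i next_prime 1.

(* b(r): largest i with p_i <= r (b(1) = 0; the index 0 is always admissible as pr 0 = 1) *)
Definition b (r : nat) : nat := \max_(i < r.+1 | pr i <= r) i.

(* Main.v *)
Require Import Defs.
From mathcomp Require Import all_boot zify.
Set Implicit Arguments. Unset Strict Implicit. Unset Printing Implicit Defensive.


Lemma binC2 n : 'C((2*n).+2, n.+1) = 2 * 'C((2*n).+1, n.+1).
Proof.
rewrite binS.
have -> : 'C((2*n).+1, n) = 'C((2*n).+1, n.+1).
  rewrite -[LHS](@bin_sub (2*n).+1 n); last lia.
  congr 'C(_,_); lia.
lia.
Qed.

Lemma central_rec n : n.+1 * 'C((2*n.+1), n.+1) = 2 * (2*n).+1 * 'C(2*n, n).
Proof.
have -> : 2 * n.+1 = (2*n).+2 by lia.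
rewrite binC2 mulnCA.
have h2 := mul_bin_diag (2*n).+1 n. rewrite /= in h2.
by rewrite -h2 mulnA.
Qed.

Lemma central_lower n : 4 ^ n <= (2*n).+1 * 'C(2*n, n).
Proof.
elim: n => [|n IH]; first by rewrite bin0.
have h := central_rec n.
rewrite -(leq_pmul2l (ltn0Sn n)) expnS.
have -> : n.+1 * ((2 * n.+1).+1 * 'C(2 * n.+1, n.+1)) =
          (2 * n.+1).+1 * (n.+1 * 'C(2 * n.+1, n.+1)) by rewrite mulnCA.
rewrite h.
nia.
Qed.

Lemma central_upper n : 0 < n -> 2 * 'C(2*n, n) <= 4 ^ n.
Proof.
case: n => // n _; elim: n => [|n IH]; first by [].
have h := central_rec n.+1.
rewrite expnS.
have : n.+2 * 'C(2 * n.+2, n.+2) <= n.+2 * (4 * 'C(2 * n.+1, n.+1)).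
  rewrite h. nia.
rewrite leq_pmul2l //. nia.
Qed.

Lemma binodd_le k : 'C((2*k).+1, k.+1) <= 4 ^ k.
Proof.
have h1 := binC2 k.
have h2 := central_upper (ltn0Sn k).
move: h2; rewrite (_ : 2 * k.+1 = (2*k).+2) ?h1 ?expnS; lia.
Qed.


Definition primf (p : nat) := if prime p then p else 1.
Definition prim (m : nat) := \prod_(0 <= p < m.+1) primf p.

Lemma primf_gt0 p : 0 < primf p.
Proof. rewrite /primf; case: ifP => // /prime_gt0 //. Qed.

Lemma prime_ndvd_fact p n : prime p -> n < p -> ~~ (p %| n`!).
Proof.
move=> pp; elim: n => [|n IH] hn; first by rewrite fact0 Euclid_dvd1.
rewrite factS Euclid_dvdM // negb_or IH ?andbT; last lia.
apply/negP => /dvdn_leq; lia.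
Qed.

Lemma prod_primf_dvd a c N :
  (forall p, a <= p < c -> prime p -> p %| N) -> \prod_(a <= p < c) primf p %| N.
Proof.
elim: c => [|c IH] H; first by rewrite big_geq.
case: (leqP a c) => hac; last by rewrite big_geq.
rewrite big_nat_recr //=.
have IH' := IH (fun p hp => H p (ltac:(lia))).
rewrite /primf; case: ifP => pc; last by rewrite muln1.
rewrite Gauss_dvd ?IH' ?andbT; last first.
  rewrite coprime_sym prime_coprime // Euclid_dvd_prod // big_has.
  apply/hasPn => i; rewrite mem_index_iota => hi /=.
  rewrite /primf; case: ifP => ip; last by rewrite Euclid_dvd1.
  apply/negP => /(dvdn_leq (prime_gt0 ip)); lia.
apply: H => //; lia.
Qed.

Lemma prim_le m : prim m <= 4 ^ m.
Proof.
elim/ltn_ind: m => m IH.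
case: m IH => [|[|[|m]]] IH.
- by rewrite /prim unlock; vm_compute.
- by rewrite /prim unlock; vm_compute.
- by rewrite /prim unlock; vm_compute.
move: IH; move Hm: m.+3 => M IH.
have hM3 : 3 <= M by lia.
have : (exists k, M = 2 * k + 1 /\ 0 < k) \/ (exists k, M = 2 * k + 2 /\ 0 < k).
  case: (boolP (M %% 2 == 1)) => h; [left; exists (M %/ 2) | right; exists ((M %/ 2).-1)]; lia.
case=> [[k [hk1 hk2]] | [k [hk1 hk2]]].
-
  have hkm : k.+2 <= M.+1 by lia.
  rewrite /prim (@big_cat_nat _ _ _ k.+2) //.
  have e1 := IH k.+1 ltac:(lia).
  have e2 : \prod_(k.+2 <= p < M.+1) primf p <= 4 ^ k.
    apply: leq_trans (binodd_le k).
    apply: dvdn_leq; first by rewrite bin_gt0; lia.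
    apply: prod_primf_dvd => p hp pp.
    have hf := bin_fact (n := (2*k).+1) (m := k.+1) ltac:(lia).
    have : p %| ((2*k).+1)`!.
      apply: dvdn_fact. rewrite (prime_gt0 pp) /=; lia.
    rewrite -hf Euclid_dvdM // Euclid_dvdM // (negbTE (prime_ndvd_fact (n:=k.+1) pp _)); last lia.
    rewrite (negbTE (prime_ndvd_fact (n:=(2*k).+1 - k.+1) pp _)); last lia.
    by rewrite !orbF.
  apply: leq_trans (leq_mul e1 e2) _.
  by rewrite -expnD leq_exp2l //; lia.
-
  rewrite /prim big_nat_recr //= [primf M]/primf.
  have -> : prime M = false.
    apply/negP => pM; case: (even_prime pM); lia.
  rewrite muln1; have h := IH M.-1 ltac:(lia).
  rewrite /prim prednK in h; last lia.
  apply: leq_trans h _; rewrite leq_exp2l //; lia.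
Qed.


Definition tk n d := (2*n) %/ d - 2 * (n %/ d).

Lemma divn_eqq q m d : q * d <= m < q.+1 * d -> m %/ d = q.
Proof.
move=> /andP[h1 h2]; have d0 : 0 < d by case: d h1 h2 => // _; rewrite muln0.
have -> : m = q * d + (m - q * d) by lia.
rewrite divnMDl // divn_small ?addn0 //; rewrite mulSn in h2; lia.
Qed.

Lemma tk_le1 n d : 0 < d -> tk n d <= 1.
Proof.
move=> d0; rewrite /tk.
have e : 2 * n = (2 * (n %/ d)) * d + 2 * (n %% d) by rewrite {1}(divn_eq n d); lia.
rewrite e divnMDl //.
have : 2 * (n %% d) %/ d < 2 by rewrite ltn_divLR // ; have := ltn_pmod n d0; lia.
lia.
Qed.

Lemma div2n_ge n d : 0 < d -> 2 * (n %/ d) <= (2 * n) %/ d.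
Proof.
move=> d0.
have e : 2 * n = (2 * (n %/ d)) * d + 2 * (n %% d) by rewrite {1}(divn_eq n d); lia.
by rewrite e divnMDl // leq_addr.
Qed.

Lemma tk0 n d : 2 * n < d -> tk n d = 0.
Proof. move=> h; rewrite /tk !divn_small //; lia. Qed.

Lemma logn_bin p n : prime p ->
  logn p 'C(2*n, n) = \sum_(1 <= k < (2*n).+1) tk n (p ^ k).
Proof.
move=> pp.
have hf := bin_fact (n := 2*n) (m := n) ltac:(lia).
rewrite (_ : 2 * n - n = n) in hf; last lia.
have p1 : 1 < p by apply: prime_gt1.
have : logn p ('C(2 * n, n) * (n`! * n`!)) = logn p (2*n)`! by rewrite hf.
rewrite lognM ?bin_gt0 ?muln_gt0 ?fact_gt0 //; last lia.
rewrite lognM ?fact_gt0 // !logn_fact //.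
have -> : \sum_(1 <= k < n.+1) n %/ p ^ k = \sum_(1 <= k < (2*n).+1) n %/ p ^ k.
  rewrite [RHS](@big_cat_nat _ _ _ n.+1) //=; last lia.
  rewrite [X in _ = _ + X]big1_seq ?addn0 // => k /andP[_]; rewrite mem_index_iota => hk.
  apply: divn_small; apply: leq_trans (ltn_expl k p1); lia.
have -> : \sum_(1 <= k < (2*n).+1) (2*n) %/ p ^ k =
          \sum_(1 <= k < (2*n).+1) tk n (p ^ k) + 2 * \sum_(1 <= k < (2*n).+1) n %/ p ^ k.
  rewrite big_distrr -big_split /=; apply: eq_bigr => k _.
  rewrite /tk subnK // div2n_ge // expn_gt0; lia.
lia.
Qed.

Lemma sum_tk_le p n N : prime p -> 0 < n ->
  \sum_(1 <= k < N.+1) tk n (p ^ k) <= minn N (trunc_log p (2*n)).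
Proof.
move=> pp n0; have p1 := prime_gt1 pp.
elim: N => [|N IH]; first by rewrite big_geq.
rewrite big_nat_recr //=.
case: (leqP N.+1 (trunc_log p (2*n))) => h.
  have h1 : tk n (p ^ N.+1) <= 1 by apply: tk_le1; rewrite expn_gt0 (prime_gt0 pp).
  lia.
rewrite tk0; first lia.
apply: leq_trans (trunc_log_ltn (2*n) p1) _.
by rewrite leq_exp2l.
Qed.

Lemma logn_bin_trunc p n : prime p -> 0 < n -> logn p 'C(2*n, n) <= trunc_log p (2*n).
Proof.
move=> pp n0; rewrite logn_bin //.
apply: leq_trans (sum_tk_le (2*n) pp n0) _; lia.
Qed.

Lemma logn_bin_pow p n : prime p -> 0 < n -> p ^ logn p 'C(2*n, n) <= 2*n.
Proof.
move=> pp n0; have p1 := prime_gt1 pp.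
apply: leq_trans (trunc_logP p1 _); last lia.
by rewrite leq_exp2l // logn_bin_trunc.
Qed.

Lemma logn_bin_le1 p n : prime p -> 0 < n -> 2 * n < p * p -> logn p 'C(2*n, n) <= 1.
Proof.
move=> pp n0 h; have p1 := prime_gt1 pp.
apply: leq_trans (logn_bin_trunc pp n0) _.
rewrite -ltnS -(ltn_exp2l _ _ p1).
apply: leq_ltn_trans (trunc_logP p1 _) _; first lia.
by rewrite expnS expn1.
Qed.

Lemma logn_bin_mid p n : prime p -> p <= n -> 2 * n < 3 * p -> 2 * n < p * p ->
  logn p 'C(2*n, n) = 0.
Proof.
move=> pp h1 h2 h3; have p1 := prime_gt1 pp.
rewrite logn_bin // big1_seq // => k /andP[_]; rewrite mem_index_iota => hk.
case: k hk => [|[|k]] hk; first lia.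
  rewrite expn1 /tk (@divn_eqq 2) ?(@divn_eqq 1) //; lia.
apply: tk0; apply: leq_trans h3 _.
apply: (@leq_trans (p ^ 2)); first by rewrite expnS expn1.
by rewrite leq_exp2l.
Qed.


Definition F1 n K0 p := if p < K0 then 2 * n else 1.
Definition F2 n p := if prime p && (3 * p <= 2 * n) then p else 1.
Definition F3 n p := if prime p && (n < p) then p else 1.
Definition Pn n := \prod_(0 <= p < (2*n).+1) F3 n p.

Lemma logn_nprime p m : ~~ prime p -> logn p m = 0.
Proof.
move=> np; apply/eqP; rewrite -leqn0 leqNgt logn_gt0 mem_primes.
by rewrite (negbTE np).
Qed.

Lemma binC_decomp n : 0 < n ->
  'C(2*n, n) = \prod_(0 <= p < (2*n).+1) p ^ logn p 'C(2*n, n).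
Proof.
move=> n0; set C := 'C(2*n, n).
have C0 : 0 < C by rewrite bin_gt0; lia.
rewrite -{1}(partnT C0) (@widen_partn (C + 2 * n)); last lia.
rewrite (@big_cat_nat _ _ _ (2*n).+1) //=; last lia.
rewrite [X in _ * X = _]big1_seq ?muln1; last first.
  move=> p /andP[_]; rewrite mem_index_iota => hp.
  case: (boolP (prime p)) => pp; last by rewrite logn_nprime.
  have h := logn_bin_pow pp n0.
  case e: (logn p C) h => [|e'] h; first by [].
  have : p <= p ^ e'.+1 by rewrite -{1}(expn1 p) leq_exp2l ?prime_gt1.
  lia.
by apply: eq_bigl.
Qed.

Lemma pw n K0 p : 0 < n -> 2 * n < K0 * K0 ->
  p ^ logn p 'C(2*n, n) <= F1 n K0 p * F2 n p * F3 n p.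
Proof.
move=> n0 hK.
have g1 : 0 < F1 n K0 p by rewrite /F1; case: ifP => _; lia.
have g2 : 0 < F2 n p by rewrite /F2; case: ifP => // /andP[/prime_gt0].
have g3 : 0 < F3 n p by rewrite /F3; case: ifP => // /andP[/prime_gt0].
case: (boolP (prime p)) => pp; last first.
  by rewrite (logn_nprime _ pp) expn0 !muln_gt0 g1 g2 g3.
have h := logn_bin_pow pp n0.
case: (ltnP p K0) => hpK.
  rewrite /F1 hpK; apply: leq_trans h _; rewrite -mulnA; apply: leq_pmulr; by rewrite muln_gt0 g2 g3.
have hpp : 2 * n < p * p by apply: leq_trans hK _; apply: leq_mul.
have h1 := logn_bin_le1 pp n0 hpp.
case e: (logn p 'C(2*n, n)) h1 => [|[|]] // _.
  by rewrite expn0 !muln_gt0 g1 g2 g3.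
rewrite expn1.
rewrite e expn1 in h.
case: (leqP (3 * p) (2 * n)) => h3.
  have -> : F2 n p = p by rewrite /F2 pp h3.
  rewrite -mulnA mulnCA; apply: leq_pmulr; by rewrite muln_gt0 g1 g3.
case: (ltnP n p) => h4.
  have -> : F3 n p = p by rewrite /F3 pp h4.
  apply: leq_pmull; by rewrite muln_gt0 g1 g2.
have := logn_bin_mid pp h4 h3 hpp; rewrite e //.
Qed.

Lemma F1prod n K0 : 0 < n -> \prod_(0 <= p < (2*n).+1) F1 n K0 p <= (2*n) ^ K0.
Proof.
move=> n0.
have g : forall p, 0 < F1 n K0 p by move=> p; rewrite /F1; case: ifP => _; lia.
apply: (@leq_trans (\prod_(0 <= p < (2*n).+1 + K0) F1 n K0 p)).
  have h : (2*n).+1 <= (2*n).+1 + K0 by lia.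
  rewrite [X in _ <= X](@big_cat_nat _ _ _ (2*n).+1) //=.
  by apply: leq_pmulr; apply: prodn_gt0.
have h : K0 <= (2*n).+1 + K0 by lia.
rewrite (@big_cat_nat _ _ _ K0) //=.
rewrite [X in _ * X]big1_seq ?muln1; last first.
  move=> p /andP[_]; rewrite mem_index_iota /F1 => hp; case: ifP => //; lia.
rewrite (@eq_big_nat _ _ _ 0 K0 _ (fun _ => 2 * n)); last first.
  by move=> p hp; rewrite /F1 (_ : p < K0) //; lia.
by rewrite prod_nat_const_nat subn0.
Qed.

Lemma F2prod n : \prod_(0 <= p < (2*n).+1) F2 n p = prim ((2*n) %/ 3).
Proof.
have h : ((2*n) %/ 3).+1 <= (2*n).+1 by lia.
rewrite (@big_cat_nat _ _ _ ((2*n) %/ 3).+1) //=.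
rewrite [X in _ * X]big1_seq ?muln1; last first.
  move=> p /andP[_]; rewrite mem_index_iota /F2 => hp; case: ifP => // /andP[_]; lia.
apply: eq_big_nat => p hp; rewrite /F2 /primf.
case: (prime p) => //=; rewrite (_ : 3 * p <= 2 * n) //; lia.
Qed.

Lemma erdos n K0 : 0 < n -> 2 * n < K0 * K0 ->
  4 ^ n <= (2*n).+1 * ((2*n) ^ K0 * 4 ^ ((2*n) %/ 3) * Pn n).
Proof.
move=> n0 hK.
apply: leq_trans (central_lower n) _.
rewrite leq_mul2l /=.
rewrite binC_decomp //.
apply: leq_trans (leq_prod (fun p _ => pw p n0 hK)) _.
rewrite !big_split /=.
apply: leq_mul; last by [].
apply: leq_mul; first exact: F1prod.
by rewrite F2prod prim_le.
Qed.


Lemma pow_ineq j : 7 <= j -> (j + 2) * (12 * 2 ^ j + 6) < 2 ^ j * 2 ^ j.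
Proof.
move=> hj; have [i ->] : exists i, j = i + 7 by exists (j - 7); lia.
elim: i => [|i IH]; first by [].
rewrite (_ : i.+1 + 7 = (i + 7).+1) // expnS.
move: IH; set X := 2 ^ (i + 7); nia.
Qed.

Lemma Pn_large n : 4 ^ 7 <= n -> 2 * n < Pn n.
Proof.
move=> hn.
have n0 : 0 < n by apply: leq_trans hn.
set j := trunc_log 4 n.
have h1 : 4 ^ j <= n by apply: trunc_logP.
have h2 : n < 4 ^ j.+1 by apply: trunc_log_ltn.
have hj : 7 <= j.
  have : 4 ^ 7 < 4 ^ j.+1 by apply: leq_ltn_trans h2.
  by rewrite ltn_exp2l.
set X := 2 ^ j.
have e4 : 4 ^ j = X * X by rewrite /X -expnMn.
have hX := pow_ineq hj; rewrite -/X in hX.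
set K0 := 4 * X.
have hK : 2 * n < K0 * K0 by move: h2; rewrite expnS e4 /K0; lia.
rewrite ltnNge; apply/negP => hP.
have E := erdos n0 hK.
set m3 := (2 * n) %/ 3 in E.
set Y := 4 ^ (j + 2).
have eY : Y = 16 * (X * X) by rewrite /Y expnD e4 mulnC.
have hY : (2 * n).+1 <= Y by move: h2; rewrite expnS e4 eY; lia.
have E2 : 4 ^ (n - m3) * 4 ^ m3 <= Y ^ (K0 + 2) * 4 ^ m3.
  rewrite -expnD subnK; last by rewrite /m3; lia.
  apply: leq_trans E _.
  have a1 : (2 * n) ^ K0 <= Y ^ K0 by rewrite leq_exp2r; lia.
  have a2 : Pn n <= Y by lia.
  apply: (@leq_trans (Y * (Y ^ K0 * 4 ^ m3 * Y))).
    by apply: leq_mul => //; apply: leq_mul => //; apply: leq_mul.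
  rewrite expnD (expnS Y 1) expn1.
  set A := Y ^ K0; set B := 4 ^ m3; lia.
rewrite leq_pmul2r ?expn_gt0 // in E2.
have E3 : (4 ^ (n - m3)) ^ 3 <= (Y ^ (K0 + 2)) ^ 3 by rewrite leq_exp2r.
rewrite /Y -!expnM in E3.
have E4 : 4 ^ (X * X) <= 4 ^ ((j + 2) * ((K0 + 2) * 3)).
  apply: leq_trans E3; rewrite leq_exp2l //; rewrite /m3; lia.
rewrite leq_exp2l // /K0 in E4.
lia.
Qed.


Definition two_primes n := exists t1 t2,
  [/\ prime t1, prime t2, n < t1, t1 < t2 & t2 <= 2 * n].

Lemma Pn_two n : 0 < n -> 2 * n < Pn n -> two_primes n.
Proof.
move=> n0; rewrite /Pn /F3 -big_mkcond -big_filter.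
have hs : sorted ltn [seq p <- index_iota 0 (2 * n).+1 | prime p && (n < p)].
  by apply: sorted_filter; [exact: ltn_trans | exact: iota_ltn_sorted].
have hm : forall x, x \in [seq p <- index_iota 0 (2 * n).+1 | prime p && (n < p)] ->
    [/\ prime x, n < x & x <= 2 * n].
  by move=> x; rewrite mem_filter mem_index_iota => /andP[/andP[? ?] ?]; split => //; lia.
move: hs hm; case: [seq p <- _ | _] => [|a [|b s]] hs hm.
- rewrite big_nil; lia.
- rewrite big_seq1; have [_ _ ?] := hm a (mem_head _ _); lia.
- move=> _; have [pa na _] := hm a (mem_head _ _).
  have [pb _ bb] : [/\ prime b, n < b & b <= 2 * n] by apply: hm; rewrite inE mem_head orbT.
  exists a, b; split => //.
  by move: hs => /= /andP[].
Qed.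

Fixpoint chain_ok (s : seq nat) : bool :=
  match s with
  | a :: ((b :: c :: _) as s') => [&& prime b, prime c, a < b, b < c, c <= 2 * a & chain_ok s']
  | _ => true
  end.

Fixpoint ctop (s : seq nat) : nat :=
  match s with
  | a :: ((b :: c :: _) as s') => ctop s'
  | [:: a; b] => a
  | _ => 0
  end.

Lemma chain_two s : chain_ok s -> forall n, head 0 s <= n < ctop s -> two_primes n.
Proof.
elim: s => [|a s IH] //=.
case: s IH => [|b [|c r]] IH //=.
- move=> _ n; lia.
- move=> _ n; lia.
- move=> /andP[pb /andP[pc /andP[ab /andP[bc /andP[ca ok]]]]] n /andP[an nt].
  case: (ltnP n b) => nb.
    exists b, c; split => //; lia.
  by apply: IH => //; rewrite nb.
Qed.

Definition ch := [:: 7; 11; 13; 19; 23; 37; 43; 73; 83; 139; 163; 277; 317; 547; 631; 1093; 1259; 2179; 2503; 4357; 5003; 8713; 9973; 17419; 19937].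

Lemma ch_ok : chain_ok ch. Proof. by vm_compute. Qed.
Lemma ch_top : ctop ch = 17419. Proof. by vm_compute. Qed.

Lemma two_primes_all n : 6 <= n -> two_primes n.
Proof.
move=> n6.
case: (leqP (4 ^ 7) n) => hn.
  apply: Pn_two; first lia.
  exact: Pn_large.
case: (ltnP n 7) => h7.
  have -> : n = 6 by lia.
  by exists 7, 11.
apply: (chain_two ch_ok); rewrite ch_top /=.
rewrite h7 /=; apply: leq_trans hn _; by vm_compute.
Qed.

Lemma bertrand n : 0 < n -> exists t, [/\ prime t, n < t & t <= 2 * n].
Proof.
move=> n0; case: (leqP 6 n) => h.
  have [t1 [t2 [p1 _ h1 h2 h3]]] := two_primes_all h.
  exists t1; split => //; lia.
case: n n0 h => [|[|[|[|[|[|n]]]]]] // _ _.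
- by exists 2.
- by exists 3.
- by exists 5.
- by exists 5.
- by exists 7.
Qed.


Lemma np_spec n : [/\ prime (next_prime n), n < next_prime n &
  forall t, prime t -> n < t -> next_prime n <= t].
Proof.
rewrite /next_prime; case: ex_minnP => m /andP[h1 h2] hmin; split => // t pt nt.
by apply: hmin; rewrite nt pt.
Qed.

Lemma prS i : pr i.+1 = next_prime (pr i). Proof. by []. Qed.

Lemma pr_gt i : i < pr i.
Proof. elim: i => [|i IH] //; rewrite prS; have [_ h _] := np_spec (pr i); lia. Qed.

Lemma b_le r : 0 < r -> pr (b r) <= r.
Proof.
move=> r0; rewrite /b.
apply: (big_ind (fun x => pr x <= r)) => //.
move=> x y hx hy; rewrite /maxn; by case: ifP.
Qed.

Lemma b_gt r : 0 < r -> r < pr (b r).+1.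
Proof.
move=> r0; rewrite ltnNge; apply/negP => h.
have hi : (b r).+1 < r.+1 by have := pr_gt (b r).+1; lia.
have := @leq_bigmax_cond _ (fun i : 'I_r.+1 => pr i <= r) (fun i => nat_of_ord i) (Ordinal hi) h.
rewrite -/(b r) /=; lia.
Qed.

Lemma q1_spec r : 0 < r -> [/\ prime (pr (b r).+1), r < pr (b r).+1 &
  forall t, prime t -> r < t -> pr (b r).+1 <= t].
Proof.
move=> r0; have [h1 h2 h3] := np_spec (pr (b r)).
split => //; first exact: b_gt.
move=> t pt rt; apply: h3 => //; have := b_le r0; lia.
Qed.

Lemma q2_spec r : [/\ prime (pr (b r).+2), pr (b r).+1 < pr (b r).+2 &
  forall t, prime t -> pr (b r).+1 < t -> pr (b r).+2 <= t].
Proof. exact: np_spec. Qed.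

Lemma Sr_prime r q : prime q -> Sr r q = q - r.
Proof.
move=> pq; rewrite /Sr primes_prime // big_seq1 logn_prime // eqxx /=.
by rewrite expn0 mul1n.
Qed.

Lemma Sr_pq r q t : prime q -> prime t -> q != t -> Sr r (q * t) = (q - r) * (t - r).
Proof.
move=> pq pt qt.
have q0 := prime_gt0 pq; have t0 := prime_gt0 pt.
rewrite /Sr (perm_big [:: q; t]); last first.
  apply: uniq_perm; first exact: primes_uniq.
    by rewrite /= inE andbT.
  move=> x; rewrite primesM // !primes_prime // !inE.
  by [].
rewrite big_cons big_seq1 !lognM // !logn_prime // !eqxx (negbTE qt) eq_sym (negbTE qt) /=.
by rewrite !expn0 !mul1n.
Qed.

Lemma Sr_cases r m : 0 < m -> 0 < Sr r m ->
  m = 1 \/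
  (exists q a, [/\ prime q, r < q, m = q ^ a.+1 & Sr r m = q ^ a * (q - r)]) \/
  (exists q q', [/\ prime q, prime q', r < q, q < q' & (q - r) * (q' - r) <= Sr r m]).
Proof.
move=> m0 S0.
have hsort := sorted_primes m.
have hmem : forall x, x \in primes m -> prime x by move=> x; rewrite mem_primes => /andP[].
move: S0 hsort hmem; rewrite /Sr.
case E: (primes m) => [|q [|q' s]] S0 hsort hmem.
- left; move/eqP: E; rewrite primes_eq0; lia.
- right; left.
  have pq : prime q by apply: hmem; rewrite mem_head.
  have qm : q \in primes m by rewrite E mem_head.
  have lg : 0 < logn q m by rewrite logn_gt0.
  rewrite big_seq1 in S0 *.
  exists q, (logn q m).-1; split => //.
  + move: S0; rewrite muln_gt0 => /andP[_]; lia.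
  + rewrite prednK //; apply: eqn_from_log; [done | by rewrite expn_gt0 prime_gt0 | ].
    move=> p; rewrite [RHS]lognX (logn_prime _ pq).
    case: eqP => [-> | pq']; first by rewrite muln1.
    rewrite muln0; apply/eqP; rewrite -leqn0 leqNgt logn_gt0 E inE.
    by apply/eqP.
- right; right.
  have pq : prime q by apply: hmem; rewrite mem_head.
  have pq' : prime q' by apply: hmem; rewrite inE mem_head orbT.
  move: hsort => /= /andP[qq' _].
  rewrite !big_cons in S0 *.
  move: S0; set A := q ^ _; set B := q' ^ _; set R := \prod_(_ <- s) _ => S0.
  move: (S0); rewrite !muln_gt0 => /andP[/andP[A0 qr] /andP[/andP[B0 qr'] R0]].
  exists q, q'; split => //; first lia.
  rewrite mulnA; apply: (@leq_trans (A * (q - r) * (B * (q' - r)))); last by apply: leq_pmulr.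
  apply: leq_mul; [apply: leq_pmull | apply: leq_pmull] => //.
Qed.


Lemma small_gap r q : 0 < r < 6 -> prime q -> r < q ->
  (forall t, prime t -> r < t -> q <= t) -> exists t, [/\ prime t, q < t & t <= q + r].
Proof.
move=> hr pq rq hm.
have q7 : q <= 7 by apply: hm => //; lia.
have hm2 : r < 2 -> q <= 2 := hm 2 isT.
have hm3 : r < 3 -> q <= 3 := hm 3 isT.
have hm5 : r < 5 -> q <= 5 := hm 5 isT.
case: q pq rq q7 hm2 hm3 hm5 {hm} => [|[|[|[|[|[|[|[|q]]]]]]]] // pq rq _ hm2 hm3 hm5.
- by exists 3; split => //; lia.
- by exists 5; split => //; lia.
- by exists 7; split => //; lia.
- by exists 11; split => //; lia.
Qed.

Lemma gap_q2 r : 0 < r -> pr (b r).+2 <= pr (b r).+1 + r.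
Proof.
move=> r0.
have [pq1 rq1 mq1] := q1_spec r0.
have [pq2 q12 mq2] := q2_spec r.
case: (leqP 6 r) => hr.
  have [t1 [t2 [p1 p2 h1 h2 h3]]] := two_primes_all hr.
  have e1 := mq1 t1 p1 h1.
  have e2 := mq2 t2 p2 ltac:(lia).
  lia.
have [t [pt h1 h2]] := small_gap (ltac:(lia) : 0 < r < 6) pq1 rq1 mq1.
have := mq2 t pt h1; lia.
Qed.

Theorem theorem3p1 (p r : nat) : prime p -> 0 < r ->
  (inF r p <-> r < p < (pr (b r).+1 - r) * (pr (b r).+2 - r) + r).
Proof.
move=> pp r0.
have [pq1 rq1 mq1] := q1_spec r0.
have [pq2 q12 mq2] := q2_spec r.
have g2 := gap_q2 r0.
move: pq1 rq1 mq1 pq2 q12 mq2 g2.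
move: (pr (b r).+1) (pr (b r).+2) => q1 q2 pq1 rq1 mq1 pq2 q12 mq2 g2.
have p0 := prime_gt0 pp.
have hq1 : q1 <= 2 * r.
  have [t [pt h1 h2]] := bertrand r0.
  have := mq1 t pt h1; lia.
rewrite /inF /inB Sr_prime //.
split.
- move=> [[_ Sp] hF].
  apply/andP; split; first lia.
  rewrite ltnNge; apply/negP => hge.
  case: (ltnP p (q1 * q2)) => hpq.
    have hS := Sr_pq r pq1 pq2 (ltac:(lia) : q1 != q2).
    have h2 : 0 < q1 * q2 by rewrite muln_gt0 !prime_gt0.
    have h1 : 0 < Sr r (q1 * q2) by rewrite hS muln_gt0; lia.
    have h := hF (q1 * q2) (conj h2 h1) hpq; rewrite hS in h; lia.
  set x := p %/ q1.
  have q10 : 0 < q1 by lia.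
  have hx : q2 <= x by rewrite /x leq_divRL // mulnC.
  have hxp : x * q1 <= p by apply: leq_trunc_div.
  have hpx : p < x.+1 * q1 by apply: ltn_ceil.
  have [t [pt h1 h2]] := bertrand (ltac:(lia) : 0 < x).
  have hS := Sr_pq r pq1 pt (ltac:(lia) : q1 != t).
  have hm : p < q1 * t by apply: leq_trans hpx _; rewrite mulnC leq_mul2l; lia.
  have h4 : 0 < q1 * t by rewrite muln_gt0 !prime_gt0.
  have h3 : 0 < Sr r (q1 * t) by rewrite hS muln_gt0; lia.
  have := hF (q1 * t) (conj h4 h3) hm; rewrite hS.
  set d := q1 - r; set u := t - r.
  have ed : q1 = d + r by rewrite /d; lia.
  have eu : u <= 2 * x - r by rewrite /u; lia.
  have hdr : d <= r by lia.
  have k0 : d * u <= d * (2 * x - r) by rewrite leq_mul2l eu orbT.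
  have hxr : r <= x by lia.
  have k1 : d * (2 * x - r) = d * x + d * (x - r).
    by rewrite -mulnDr; congr (_ * _); lia.
  have k2 : d * (x - r) <= r * (x - r) by rewrite leq_mul2r hdr orbT.
  have k3 : r * (x - r) = r * x - r * r by rewrite mulnBr.
  have k4 : r <= r * r by rewrite leq_pmull.
  have k5 : r * r <= r * x by rewrite leq_mul2l hxr orbT.
  have k6 : x * q1 = d * x + r * x by rewrite ed mulnDr mulnC (mulnC x r).
  lia.
- move=> /andP[rp hp]; split; first by split => //; lia.
  move=> m [m0 Sm] pm.
  case: (Sr_cases m0 Sm) => [m1 | [[q [a [pq rq em eS]]] | [q [q' [pq pq' rq qq' hS]]]]].
  + lia.
  + have e1 := mq1 q pq rq.
    case: a em eS => [|a] em eS.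
      rewrite expn1 in em; rewrite eS expn0 mul1n; lia.
    rewrite eS.
    have : q <= q ^ a.+1 by rewrite -{1}(expn1 q) leq_exp2l ?prime_gt1.
    have : q2 - r <= q1 by lia.
    move=> h1 h2.
    have : (q2 - r) * (q1 - r) <= q ^ a.+1 * (q - r) by apply: leq_mul; lia.
    rewrite mulnC; lia.
  + have e1 := mq1 q pq rq.
    have e2 := mq2 q' pq' ltac:(lia).
    have : (q1 - r) * (q2 - r) <= (q - r) * (q' - r) by apply: leq_mul; lia.
    lia.
Qed.
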